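(* Let $k \ge 3$ and $q \ge 0$ be integers with $k$ odd, and let $s \in \{0,1,2\}$ be the unique integer satisfying $s \equiv q + \frac{k-3}{2} \pmod 3$. Then, for any integer $n$ such that \[n \ge \max\left\{k,\frac{k^2}{6} + \frac{q-s}{3} k + s - \frac{1}{2}\right\}\] and any function $f:[n]\to \{-1,1\}$ with $|f([n])| \le q$, there is a $k$-block $B\subseteq[n]$ with $|f(B)|=1$.
   Context: $[n]=\{1,\dots,n\}$; $f(Y)=\sum_{y\in Y}f(y)$; a $k$-block is a set of $k$ consecutive integers. *)

(* Defs.v *)
From mathcomp Require Import all_boot all_order all_algebra.
Set Implicit Arguments. Unset Strict Implicit. Unset Printing Implicit Defensive.
Import Order.TTheory GRing.Theory Num.Theory.
Local Open Scope ring_scope.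

Definition block_sum (f : nat -> int) (a k : nat) : int :=
  \sum_(a <= i < a + k) f i.

(* Main.v *)
Require Import Defs.
From mathcomp Require Import all_boot all_order all_algebra.
From mathcomp Require Import zify ring lra.
From Stdlib Require Classical_Prop.
Import Order.TTheory GRing.Theory Num.Theory.

Definition cnt (b : nat -> bool) (a l : nat) : nat :=
  (\sum_(a <= i < a + l) (b i : nat))%N.

Lemma cnt_split b a l1 l2 :
  cnt b a (l1 + l2) = (cnt b a l1 + cnt b (a + l1) l2)%N.
Proof.
rewrite /cnt addnA (@big_cat_nat _ _ _ (a + l1)) //= ?leq_addr //.
Qed.

Lemma cnt_le b a l : (cnt b a l <= l)%N.
Proof.
rewrite /cnt.
apply: leq_trans (_ : (\sum_(a <= i < a + l) 1 <= l)%N).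
  by apply: leq_sum => i _; case: (b i).
by rewrite sum_nat_const_nat muln1 addKn.
Qed.

Lemma cnt_step b a l :
  cnt b a.+1 l.+1 = (cnt b a l.+1 + b (a + l.+1) - b a)%N.
Proof.
have h1 := cnt_split b a 1 l.+1.
have h2 := cnt_split b a l.+1 1.
have e1 : cnt b a 1 = b a by rewrite /cnt addn1 big_nat1.
have e2 : cnt b (a + l.+1) 1 = b (a + l.+1) by rewrite /cnt addn1 big_nat1.
rewrite add1n addn1 e1 in h1. rewrite addn1 e2 in h2.
rewrite h1 in h2. lia.
Qed.

Lemma window_bound b k t m r :
  (forall a, (1 <= a)%N -> (a + k <= (m * k + r).+1)%N -> (cnt b a k <= t)%N) ->
  (r < k)%N -> (k <= m * k + r)%N ->
  (cnt b 1 (m * k + r) <= m * t + minn r t)%N.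
Proof.
move=> H rk kn.
have P1 : forall m', (m' <= m)%N -> (cnt b 1 (m' * k) <= m' * t)%N.
  elim=> [|m' IH] lm; first by rewrite mul0n /cnt addn0 big_geq.
  rewrite mulSnr cnt_split mulSnr.
  have := IH (ltnW lm).
  have : (cnt b (1 + m' * k) k <= t)%N.
    apply: H; first lia.
    have : (m'.+1 * k <= m * k)%N by rewrite leq_mul2r lm orbT.
    rewrite mulSnr; lia.
  lia.
rewrite cnt_split.
have A := P1 m (leqnn m).
have B1 := cnt_le b (1 + m * k) r.
set a0 := (1 + m * k + r - k)%N.
have B2 : (cnt b a0 k <= t)%N by apply: H; rewrite /a0; lia.
have S := cnt_split b a0 (k - r) r.
rewrite subnK ?(ltnW rk) // in S.
have E : (1 + m * k = a0 + (k - r))%N by rewrite /a0; lia.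
rewrite E in B1 *.
lia.
Qed.

Lemma all_small b k t N :
  (forall a, (1 <= a)%N -> (a + k <= N)%N -> cnt b a k != t.+1) ->
  (0 < k)%N -> (cnt b 1 k <= t)%N ->
  forall a, (1 <= a)%N -> (a + k <= N)%N -> (cnt b a k <= t)%N.
Proof.
move=> H k0 c1; elim=> [//|a IH] a1 aN.
case: (posnP a) => [->|ap] //.
have aN' : (a + k <= N)%N by rewrite addSn in aN; lia.
have := IH ap aN'.
have := H _ a1 aN.
case: k k0 H {c1 aN aN' IH} => [//|k'] _ H.
rewrite cnt_step.
have : (b (a + k'.+1) <= 1)%N by case: (b _).
lia.
Qed.

Lemma all_big b k t N :
  (forall a, (1 <= a)%N -> (a + k <= N)%N -> cnt b a k != t.+2) ->
  (0 < k)%N -> (t.+3 <= cnt b 1 k)%N ->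
  forall a, (1 <= a)%N -> (a + k <= N)%N -> (t.+3 <= cnt b a k)%N.
Proof.
move=> H k0 c1; elim=> [//|a IH] a1 aN.
case: (posnP a) => [->|ap] //.
have aN' : (a + k <= N)%N by rewrite addSn in aN; lia.
have := IH ap aN'.
have := H _ a1 aN.
case: k k0 H {c1 aN aN' IH} => [//|k'] _ H.
rewrite cnt_step.
have : (b a <= 1)%N by case: (b _).
lia.
Qed.
Lemma arith k t q s j n m r M :
  k = (2 * t + 3)%N -> (q + t = 3 * j + s)%N -> (s < 3)%N ->
  (j * k + t + s + 1 <= n)%N -> n = (m * k + r)%N -> (r < k)%N ->
  (M <= m * t + minn r t)%N -> (q + 2 * M < n)%N.
Proof.
move=> Hk Hq Hs Hn En Hr HM.
have mj : (j <= m)%N.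
  rewrite leqNgt; apply/negP => lt.
  have : (m.+1 * k <= j * k)%N by rewrite leq_mul2r lt orbT.
  rewrite mulSn. lia.
case: (ltngtP m j) => [|gt|eq]; first lia.
  have : (m * k = 2 * (m * t) + 3 * m)%N by rewrite Hk; ring.
  lia.
subst m.
have : (j * k = 2 * (j * t) + 3 * j)%N by rewrite Hk; ring.
lia.
Qed.

Definition bp (f : nat -> int) i := f i == 1%R.
Definition bm (f : nat -> int) i := f i == (-1)%R.

Lemma blk (f : nat -> int) a l n : (1 <= a)%N -> (a + l <= n.+1)%N ->
  (forall i, (1 <= i <= n)%N -> f i = 1%R \/ f i = (-1)%R) ->
  (\sum_(a <= i < a + l) f i)%R = ((cnt (bp f) a l)%:Z - (cnt (bm f) a l)%:Z)%R
  /\ (cnt (bp f) a l + cnt (bm f) a l = l)%N.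
Proof.
move=> a1 + Hf; elim: l => [|l IH] al.
  by rewrite addn0 /cnt addn0 !big_geq.
have al' : (a + l <= n.+1)%N by rewrite addnS in al; lia.
have [IH1 IH2] := IH al'.
have e : forall b, cnt b a l.+1 = (cnt b a l + b (a + l))%N.
  by move=> b; rewrite -addn1 cnt_split /cnt addn1 big_nat1.
rewrite !e addnS big_nat_recr ?leq_addr //= IH1.
have : (1 <= a + l <= n)%N by apply/andP; split; lia.
move/Hf => -[E|E].
  have -> : bp f (a + l) = true by rewrite /bp E.
  have -> : bm f (a + l) = false by rewrite /bm E.
  rewrite E; split; [lia|lia].
have -> : bp f (a + l) = false by rewrite /bp E.
have -> : bm f (a + l) = true by rewrite /bm E.
rewrite E; split; [lia|lia].
Qed.

Local Open Scope ring_scope.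

Theorem corollary2p4 (k q s n : nat) (f : nat -> int) :
  (3 <= k)%N -> odd k ->
  (s < 3)%N -> s = (q + (k - 3) %/ 2)%N %[mod 3] ->
  (k <= n)%N ->
  (k%:Q ^+ 2 / 6%:Q + (q%:Q - s%:Q) / 3%:Q * k%:Q + s%:Q - 1 / 2%:Q <= n%:Q) ->
  (forall i, (1 <= i <= n)%N -> f i = 1 \/ f i = -1) ->
  `|\sum_(1 <= i < n.+1) f i| <= q%:Z ->
  exists a : nat, [/\ (1 <= a)%N, (a + k - 1 <= n)%N & `|block_sum f a k| = 1].
Proof.
move=> k3 ko s3 smod kn HQ Hf Hq.
set t := ((k - 3) %/ 2)%N.
have k2 : (k %% 2 = 1)%N by rewrite modn2 ko.
have Hk : k = (2 * t + 3)%N by rewrite /t; lia.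
set j := ((q + t) %/ 3)%N.
have Hqj : (q + t = 3 * j + s)%N by move: smod; rewrite /j /t modn_small //; lia.
have Hn : (j * k + t + s + 1 <= n)%N.
  have c : forall x : nat, x%:Q = x%:R :> rat := fun x => erefl.
  rewrite -(ler_nat rat); apply: le_trans HQ; rewrite le_eqVlt; apply/orP; left; apply/eqP.
  rewrite !c.
  have Hq' : q%:R = (3 * j + s)%N%:R - t%:R :> rat.
    by rewrite -Hqj natrD addrK.
  rewrite Hq' Hk !natrD !natrM; by field.
case: (Classical_Prop.classic (exists a : nat,
  [/\ (1 <= a)%N, (a + k - 1 <= n)%N & `|block_sum f a k| = 1])) => [//|Hno].
exfalso.
have Hw : forall a, (1 <= a)%N -> (a + k <= n.+1)%N ->
    [/\ cnt (bm f) a k != t.+1, cnt (bm f) a k != t.+2 &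
        (cnt (bp f) a k + cnt (bm f) a k = k)%N].
  move=> a a1 ak.
  have [B1 B2] := blk f a k n a1 ak Hf.
  have nb : `|block_sum f a k| <> 1.
    by move=> h; apply: Hno; exists a; split => //; lia.
  rewrite /block_sum B1 in nb.
  split => //; apply/eqP => E; apply: nb; lia.
have [T1 T2] := blk f 1 n n (leqnn 1) (leqnn _) Hf.
rewrite add1n in T1; rewrite T1 in Hq.
have En := divn_eq n k.
have rk : (n %% k < k)%N by rewrite ltn_mod; lia.
have [c1 c2 c3] : [/\ cnt (bm f) 1 k != t.+1, cnt (bm f) 1 k != t.+2 &
        (cnt (bp f) 1 k + cnt (bm f) 1 k = k)%N] by apply: Hw => //; lia.
have k0 : (0 < k)%N by lia.
case: (leqP (cnt (bm f) 1 k) t) => c1t.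
  have S := all_small (bm f) k t n.+1 (fun a a1 ak => let: And3 x _ _ := Hw a a1 ak in x) k0 c1t.
  have W := window_bound (bm f) k t (n %/ k) (n %% k).
  rewrite -En in W.
  have W' := W (fun a a1 ak => S a a1 ak) rk kn.
  have := arith k t q s j n (n %/ k) (n %% k) _ Hk Hqj s3 Hn En rk W'.
  lia.
have c1t' : (t.+3 <= cnt (bm f) 1 k)%N by lia.
have S := all_big (bm f) k t n.+1 (fun a a1 ak => let: And3 _ x _ := Hw a a1 ak in x) k0 c1t'.
have W := window_bound (bp f) k t (n %/ k) (n %% k).
rewrite -En in W.
have W' : (cnt (bp f) 1 n <= n %/ k * t + minn (n %% k) t)%N.
  apply: W rk kn => a a1 ak.
  have := S a a1 ak; have [_ _] := Hw a a1 ak; lia.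
have := arith k t q s j n (n %/ k) (n %% k) _ Hk Hqj s3 Hn En rk W'.
lia.
Qed.
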